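(* Let $(S,K,I)$ be a split graph and let $P=v_1v_2\ldots v_n$, with $n\geq 2$, be an induced path in the factor graph $\Phi(S)$. If $d_1=\max\{d_i: i\in[n]\}$, then for each $i\in[n]$ we have $d_i\geq d_j$ and $N_i\supseteq N_j$ for all $j$ with $i+2\leq j\leq n$.
   Context: A split graph $(S,K,I)$ is a graph $S$ together with a fixed partition $V(S)=K\dot\cup I$, where $K$ is a clique and $I$ is an independent set. For a vertex $v_i$ (or $i$) of $S$, $N_i$ denotes its open neighborhood in $S$ and $d_i=|N_i|$ its degree in $S$; for $u,v$ write $\eta_{uv}=|N_u\cap N_v|$. The factor graph $\Phi(S)$ is the loopless multigraph with vertex set $I$ in which, for distinct $u,v\in I$, there is one edge joining $u$ and $v$ for each 2-switch of $S$ acting on $u$ and $v$ (a 2-switch replaces edges $ab,cd$ with $ac,bd$ when $ab,cd\in E(S)$ and $ac,bd\notin E(S)$); equivalently, the multiplicity of the edge $uv$ is $\sigma_{uv}=(d_u-\eta_{uv})(d_v-\eta_{uv})$, and $u,v$ are adjacent in $\Phi(S)$ iff $\sigma_{uv}>0$. An induced path $v_1\ldots v_n$ in $\Phi(S)$ consists of distinct vertices with $v_iv_{i+1}$ adjacent for all $i$ and no other pair $v_iv_j$ adjacent (multiplicities are ignored for adjacency). *)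

(* Defs.v *)
From mathcomp Require Import all_boot.
Set Implicit Arguments. Unset Strict Implicit. Unset Printing Implicit Defensive.

Definition simple_graph (T : finType) (e : rel T) : Prop :=
  symmetric e /\ irreflexive e.

Definition split_graph (T : finType) (e : rel T) (K I : {set T}) : Prop :=
  [/\ simple_graph e,
      K :|: I = [set: T],
      K :&: I = set0,
      (forall x y, x \in K -> y \in K -> x != y -> e x y) &
      (forall x y, x \in I -> y \in I -> ~~ e x y)].

Definition nbhd (T : finType) (e : rel T) (v : T) : {set T} := [set y | e v y].
Definition deg (T : finType) (e : rel T) (v : T) : nat := #|nbhd e v|.
Definition eta (T : finType) (e : rel T) (u v : T) : nat :=
  #|nbhd e u :&: nbhd e v|.
(* sigma_{uv} = (d_u - eta_{uv}) (d_v - eta_{uv}) : multiplicity of uv in Phi(S) *)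
Definition sigma (T : finType) (e : rel T) (u v : T) : nat :=
  (deg e u - eta e u v) * (deg e v - eta e u v).

Definition phi_adj (T : finType) (e : rel T) (I : {set T}) (u v : T) : bool :=
  [&& u \in I, v \in I, u != v & 0 < sigma e u v].

(* v_0 ... v_{n-1} is an induced path in Phi(S) (0-based indexing) *)
Definition induced_path (T : finType) (e : rel T) (I : {set T})
    (n : nat) (v : nat -> T) : Prop :=
  [/\ (forall i, i < n -> v i \in I),
      (forall i j, i < n -> j < n -> v i = v j -> i = j),
      (forall i, i.+1 < n -> phi_adj e I (v i) (v i.+1)) &
      (forall i j, i < n -> j < n -> i.+1 < j -> ~~ phi_adj e I (v i) (v j))].

(* Main.v *)
Require Import Defs.
From mathcomp Require Import all_boot.

Lemma eta_sub (T : finType) (e : rel T) u v :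
  deg e u <= eta e u v -> nbhd e u \subset nbhd e v.
Proof.
rewrite /deg /eta => H.
have L := subset_leqif_card (subsetIl (nbhd e u) (nbhd e v)).
rewrite (geq_leqif L) in H.
apply: subset_trans H _; exact: subsetIr.
Qed.

Lemma sub_eta (T : finType) (e : rel T) u v :
  nbhd e u \subset nbhd e v -> eta e u v = deg e u.
Proof. by move/setIidPl; rewrite /eta /deg => ->. Qed.

Lemma etaC (T : finType) (e : rel T) u v : eta e u v = eta e v u.
Proof. by rewrite /eta setIC. Qed.

Lemma nonadj_sub (T : finType) (e : rel T) (I : {set T}) u v :
  u \in I -> v \in I -> u != v -> ~~ phi_adj e I u v ->
  nbhd e u \subset nbhd e v \/ nbhd e v \subset nbhd e u.
Proof.
move=> uI vI uv; rewrite /phi_adj uI vI uv /= -leqNgt leqn0 /sigma muln_eq0.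
case/orP; rewrite subn_eq0 => H; [left; exact: eta_sub|right].
by apply: eta_sub; rewrite etaC.
Qed.

Lemma adj_nsub (T : finType) (e : rel T) (I : {set T}) u v :
  phi_adj e I u v -> ~~ (nbhd e u \subset nbhd e v).
Proof.
case/and4P=> _ _ _; rewrite /sigma muln_gt0 => /andP[H _].
apply/negP => /sub_eta E; by rewrite E subnn in H.
Qed.

Lemma adj_nsub2 (T : finType) (e : rel T) (I : {set T}) u v :
  phi_adj e I u v -> ~~ (nbhd e v \subset nbhd e u).
Proof.
case/and4P=> _ _ _; rewrite /sigma muln_gt0 => /andP[_ H].
apply/negP => /sub_eta E; by rewrite etaC E subnn in H.
Qed.

Theorem lemma2p2 (T : finType) (e : rel T) (K I : {set T})
    (n : nat) (v : nat -> T) :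
  split_graph e K I ->
  2 <= n ->
  induced_path e I n v ->
  (forall i, i < n -> deg e (v i) <= deg e (v 0)) ->
  forall i j, i < n -> j < n -> i + 2 <= j ->
    deg e (v j) <= deg e (v i) /\ nbhd e (v j) \subset nbhd e (v i).
Proof.
move=> _ n2 [inI inj adj nadj] dmax.
suff S : forall i j, i < n -> j < n -> i + 2 <= j -> nbhd e (v j) \subset nbhd e (v i).
  move=> i j hi hj hij; have Hs := S i j hi hj hij; split=> //.
  exact: subset_leq_card.
have cmp : forall i j, i < n -> j < n -> i + 2 <= j ->
    nbhd e (v i) \subset nbhd e (v j) \/ nbhd e (v j) \subset nbhd e (v i).
  move=> i j hi hj hij; apply: nonadj_sub; try exact: inI.
    apply/negP=> /eqP /(inj _ _ hi hj) E; rewrite E in hij.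
    by rewrite addn2 ltnNge leqnSn in hij.
  by apply: nadj => //; rewrite addn2 in hij.
elim=> [|i IH] j hi hj hij.
  case: (cmp 0 j hi hj hij) => // H.
  have : #|nbhd e (v j)| <= #|nbhd e (v 0)| by exact: dmax.
  have L := subset_leqif_card H.
  by rewrite (geq_leqif L).
case: (cmp i.+1 j hi hj hij) => // H.
have H2 : nbhd e (v j) \subset nbhd e (v i).
  apply: IH => //; first exact: ltnW hi. rewrite addn2; rewrite addn2 in hij; exact: ltnW hij.
move/adj_nsub2: (adj i hi).
by rewrite (subset_trans H H2).
Qed.
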